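(* Let $\mathcal{C}$ be a clutter whose vertex set is a subset of $\{x_1,\dots,x_n\}$, $S=\mathbb{K}[x_1,\dots,x_n]$ with $\mathbb{K}$ a field, and let $e_1$ be an edge of $\mathcal{C}$ such that $\{e_1\}$ is a 2-collage for $\mathcal{C}$. Then $\operatorname{sreg}(S/I(\mathcal{C}))\le |e_1|-1$.
   Context: A clutter $\mathcal{C}$ consists of a finite vertex set and a collection $E(\mathcal{C})$ of subsets (edges), no edge containing another; vertices are identified with variables and $I(\mathcal{C})=(\prod_{x\in e}x : e\in E(\mathcal{C}))$ is the edge ideal. A 2-collage for $\mathcal{C}$ is a subset $C\subseteq E(\mathcal{C})$ such that for each $e\in E(\mathcal{C})$ there is a vertex $v$ with $e\setminus\{v\}$ contained in some edge of $C$. Stanley regularity: for a squarefree monomial ideal $I\subset S$, a squarefree Stanley decomposition of $S/I$ is a decomposition $S/I=\bigoplus_{i=1}^r u_i\mathbb{K}[Z_i]$ as $\mathbb{K}$-vector spaces, where $Z_i\subseteq\{x_1,\dots,x_n\}$, $u_i$ are (images of) squarefree monomials with $\operatorname{supp}(u_i)\subseteq Z_i$, and each $u_i\mathbb{K}[Z_i]$ is free over $\mathbb{K}[Z_i]$. Its Stanley regularity is $\max_i\deg(u_i)$, and $\operatorname{sreg}(S/I)$ is the minimum over all such decompositions. *)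

(* Defs.v *)
From HB Require Import structures.
From mathcomp Require Import all_boot all_order all_algebra.
From mathcomp Require Import mpoly.
Set Implicit Arguments. Unset Strict Implicit. Unset Printing Implicit Defensive.
Import GRing.Theory.
Local Open Scope ring_scope.

(* Vertices are the indices 'I_n, identified with the variables x_1..x_n of
   S = K[x_1..x_n] = {mpoly K[n]}. *)

Definition is_clutter (n : nat) (V : {set 'I_n}) (E : {set {set 'I_n}}) : Prop :=
  (forall e, e \in E -> e \subset V) /\
  (forall e f, e \in E -> f \in E -> e \subset f -> e = f).

Definition two_collage (n : nat) (V : {set 'I_n}) (E : {set {set 'I_n}})
    (C : {set {set 'I_n}}) : Prop :=
  C \subset E /\
  forall e, e \in E -> exists2 v, v \in V & exists2 f, f \in C & e :\ v \subset f.

Definition sqmono (K : fieldType) (n : nat) (A : {set 'I_n}) : {mpoly K[n]} :=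
  \prod_(i in A) 'X_i.

Definition in_edge_ideal (K : fieldType) (n : nat) (E : {set {set 'I_n}})
    (g : {mpoly K[n]}) : Prop :=
  exists h : {set 'I_n} -> {mpoly K[n]}, g = \sum_(e in E) h e * sqmono K e.

Definition in_subring (K : fieldType) (n : nat) (Z : {set 'I_n})
    (q : {mpoly K[n]}) : Prop :=
  forall m, m \in msupp q -> forall i : 'I_n, i \notin Z -> m i = 0%N.

(* A squarefree Stanley decomposition of S/I(E): a finite family of pairs
   (U_i, Z_i) with U_i \subset Z_i (u_i = prod_{x in U_i} x), such that
   S/I = (+)_i u_i K[Z_i] as K-vector spaces with each u_i K[Z_i] free over
   K[Z_i].  Independence (directness + freeness): if such a sum lies in
   I, all q_i vanish. *)
Definition stanley_decomposition (K : fieldType) (n : nat)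
    (E : {set {set 'I_n}}) (D : seq ({set 'I_n} * {set 'I_n})) : Prop :=
  [/\ (forall p, p \in D -> p.1 \subset p.2),
      (forall f : {mpoly K[n]}, exists2 q : 'I_(size D) -> {mpoly K[n]},
          (forall i : 'I_(size D), in_subring (nth (set0, set0) D i).2 (q i)) &
          in_edge_ideal E (f - \sum_(i < size D) sqmono K (nth (set0, set0) D i).1 * q i))
    & (forall q : 'I_(size D) -> {mpoly K[n]},
          (forall i : 'I_(size D), in_subring (nth (set0, set0) D i).2 (q i)) ->
          in_edge_ideal E (\sum_(i < size D) sqmono K (nth (set0, set0) D i).1 * q i) ->
          forall i : 'I_(size D), q i = 0)].

Definition stanley_reg (n : nat) (D : seq ({set 'I_n} * {set 'I_n})) : nat :=
  \max_(p <- D) #|p.1|.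

Definition sreg_le (K : fieldType) (n : nat) (E : {set {set 'I_n}}) (k : nat) : Prop :=
  exists2 D, stanley_decomposition K E D & (stanley_reg D <= k)%N.

(* Main.v *)
Require Import Defs.
From mathcomp Require Import all_boot all_order all_algebra.
From mathcomp Require Import mpoly.
From mathcomp Require Import zify.
Set Implicit Arguments. Unset Strict Implicit. Unset Printing Implicit Defensive.
Import GRing.Theory.
Local Open Scope ring_scope.

Definition mset (n : nat) (T : {set 'I_n}) : 'X_{1..n} := (\sum_(i in T) U_(i))%MM.

Lemma msetE n (T : {set 'I_n}) i : mset T i = (i \in T).
Proof.
rewrite /mset mnm_sumE.
have -> : (\sum_(x in T) U_(x)%MM i = \sum_(x in T) (x == i))%N.
  by apply: eq_bigr => x _; rewrite mnm1E.
case: (boolP (i \in T)) => Hi.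
  rewrite (bigD1 i) //= eqxx big1 // => k /andP[_ /negbTE ->] //.
rewrite big1 // => k kT; case: eqP => // E; rewrite E in kT; by rewrite kT in Hi.
Qed.

Lemma sqmonoE (K : fieldType) n (T : {set 'I_n}) : sqmono K T = 'X_[mset T].
Proof.
rewrite /sqmono /mset.
by rewrite (big_morph (@mpolyX n K) (@mpolyXD n K) (@mpolyX0 n K)).
Qed.

Definition sset n (M : 'X_{1..n}) : {set 'I_n} := [set i | M i != 0%N].

Lemma msupp_MX (K : fieldType) n (p : {mpoly K[n]}) m M :
  M \in msupp (p * 'X_[m]) -> exists2 m', m' \in msupp p & M = (m + m')%MM.
Proof. by rewrite (perm_mem (msuppMX p m)) => /mapP[m' H ->]; exists m'. Qed.

Lemma ideal_mono (K : fieldType) n (E : {set {set 'I_n}}) (g : {mpoly K[n]}) M :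
  in_edge_ideal E g -> M \in msupp g -> exists2 e, e \in E & e \subset sset M.
Proof.
move=> [h ->] HM.
case: (boolP [exists e in E, e \subset sset M]) => [/exists_inP [e ? ?]|/exists_inPn H].
  by exists e.
move: HM; rewrite mcoeff_msupp raddf_sum big1 ?eqxx // => e eE.
case: (boolP (M \in msupp (h e * sqmono K e))); last exact: memN_msupp_eq0.
rewrite sqmonoE => /msupp_MX [m' _ EM].
have := H e eE; rewrite EM; case/negP.
by apply/subsetP => i ie; rewrite inE mnmDE msetE ie.
Qed.

Definition Tset n (E : {set {set 'I_n}}) (e1 : {set 'I_n}) : {set {set 'I_n}} :=
  [set T : {set 'I_n} | (T \subset e1) && [forall e in E, ~~ (e \subset T)]].

Definition Wset n (E : {set {set 'I_n}}) (e1 : {set 'I_n}) (T : {set 'I_n}) : {set 'I_n} :=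
  [set v | (v \notin e1) && [forall e in E, ~~ (e \subset v |: T)]].

Definition Zset n (E : {set {set 'I_n}}) (e1 : {set 'I_n}) (T : {set 'I_n}) : {set 'I_n} :=
  T :|: Wset E e1 T.

Definition collage1 n (E : {set {set 'I_n}}) (e1 : {set 'I_n}) :=
  forall e, e \in E -> exists v : 'I_n, e :\ v \subset e1.

Lemma good_mono (K : fieldType) n (E : {set {set 'I_n}}) e1 T (q : {mpoly K[n]}) M :
  collage1 E e1 -> T \in Tset E e1 -> in_subring (Zset E e1 T) q ->
  M \in msupp (sqmono K T * q) ->
  sset M :&: e1 = T /\ (forall e, e \in E -> ~~ (e \subset sset M)).
Proof.
move=> hc; rewrite inE => /andP[Te1 /forall_inP TE] hq.
rewrite sqmonoE mulrC => /msupp_MX [m' m'q EM].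
have sZ : sset M \subset Zset E e1 T.
  apply/subsetP => i; rewrite inE EM mnmDE msetE.
  case: (boolP (i \in T)) => iT; first by rewrite /Zset inE iT.
  apply: contraR => iZ; by rewrite (hq m' m'q i iZ).
have Ts : T \subset sset M.
  by apply/subsetP => i iT; rewrite inE EM mnmDE msetE iT.
have HI : sset M :&: e1 = T.
  apply/setP => i; rewrite inE; apply/andP/idP => [[iM ie1]|iT].
    move/subsetP: sZ => /(_ i iM); rewrite /Zset inE => /orP[//|].
    by rewrite inE ie1.
  by rewrite (subsetP Ts i iT) (subsetP Te1 i iT).
split=> // e eE; apply/negP => eM.
have [v ev] := hc e eE.
have evT : e :\ v \subset T.
  rewrite -HI subsetI ev andbT; apply: subset_trans eM; exact: subsetDl.
case: (boolP (v \in Wset E e1 T)) => vW.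
  move: vW; rewrite inE => /andP[_ /forall_inP /(_ e eE)]; case/negP.
  apply/subsetP => i ie; rewrite !inE; case: (eqVneq i v) => //= iv.
  by apply: (subsetP evT); rewrite !inE iv.
move: (TE e eE); case/negP; apply/subsetP => i ie.
case: (eqVneq i v) => [iv|iv].
  move/subsetP: sZ => /(_ i (subsetP eM i ie)); rewrite /Zset inE => /orP[//|].
  by rewrite iv (negbTE vW).
by apply: (subsetP evT); rewrite !inE iv.
Qed.

Lemma in_subring_add (K : fieldType) n Z (p q : {mpoly K[n]}) :
  in_subring Z p -> in_subring Z q -> in_subring Z (p + q).
Proof.
move=> hp hq m; rewrite mcoeff_msupp mcoeffD => H i iZ.
case: (boolP (m \in msupp p)) => mp; first exact: hp mp i iZ.
case: (boolP (m \in msupp q)) => mq; first exact: hq mq i iZ.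
by move: H; rewrite !memN_msupp_eq0 // addr0 eqxx.
Qed.

Lemma in_subring0 (K : fieldType) n Z : in_subring Z (0 : {mpoly K[n]}).
Proof. by move=> m; rewrite mcoeff_msupp mcoeff0 eqxx. Qed.

Lemma in_ideal_add (K : fieldType) n (E : {set {set 'I_n}}) (p q : {mpoly K[n]}) :
  in_edge_ideal E p -> in_edge_ideal E q -> in_edge_ideal E (p + q).
Proof.
move=> [h1 ->] [h2 ->]; exists (fun e => h1 e + h2 e).
by rewrite -big_split /=; apply: eq_bigr => e _; rewrite mulrDl.
Qed.

Lemma in_ideal0 (K : fieldType) n (E : {set {set 'I_n}}) :
  in_edge_ideal E (0 : {mpoly K[n]}).
Proof. by exists (fun _ => 0); rewrite big1 // => e _; rewrite mul0r. Qed.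

Lemma in_ideal_mul (K : fieldType) n (E : {set {set 'I_n}}) e (p : {mpoly K[n]}) :
  e \in E -> in_edge_ideal E (p * sqmono K e).
Proof.
move=> eE; exists (fun e' => if e' == e then p else 0).
rewrite (bigD1 e) //= eqxx big1 ?addr0 // => e' /andP[_ /negbTE ->].
by rewrite mul0r.
Qed.

Definition SP (K : fieldType) n (E : {set {set 'I_n}}) e1 (f : {mpoly K[n]}) :=
  exists Q : {set 'I_n} -> {mpoly K[n]},
    (forall T, T \in Tset E e1 -> in_subring (Zset E e1 T) (Q T)) /\
    in_edge_ideal E (f - \sum_(T in Tset E e1) sqmono K T * Q T).
Arguments SP K {n} E e1 f.

Lemma SP0 (K : fieldType) n (E : {set {set 'I_n}}) e1 : SP K E e1 0.
Proof.
exists (fun _ => 0); split => [T _|]; first exact: in_subring0.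
rewrite big1 ?subr0; [exact: in_ideal0| by move=> T _; rewrite mulr0].
Qed.

Lemma SPD (K : fieldType) n (E : {set {set 'I_n}}) e1 f g :
  SP K E e1 f -> SP K E e1 g -> SP K E e1 (f + g).
Proof.
move=> [Q1 [H1 I1]] [Q2 [H2 I2]]; exists (fun T => Q1 T + Q2 T); split.
  by move=> T TT; apply: in_subring_add; [apply: H1|apply: H2].
have -> : f + g - \sum_(T in Tset E e1) sqmono K T * (Q1 T + Q2 T) =
  (f - \sum_(T in Tset E e1) sqmono K T * Q1 T) +
  (g - \sum_(T in Tset E e1) sqmono K T * Q2 T).
  rewrite (eq_bigr (fun T => sqmono K T * Q1 T + sqmono K T * Q2 T)); last first.
    by move=> T _; rewrite mulrDr.
  by rewrite big_split /= opprD addrACA.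
exact: in_ideal_add.
Qed.

Lemma SPX (K : fieldType) n (E : {set {set 'I_n}}) e1 (c : K) M :
  SP K E e1 (c *: 'X_[M]).
Proof.
case: (boolP [exists e in E, e \subset sset M]) => [/exists_inP [e eE eM]|/exists_inPn H].
  exists (fun _ => 0); split => [T _|]; first exact: in_subring0.
  rewrite big1 ?subr0; last by move=> T _; rewrite mulr0.
  have le : (mset e <= M)%MM.
    apply/mnm_lepP => i; rewrite msetE; case: (boolP (i \in e)) => // ie.
    by move: (subsetP eM i ie); rewrite inE lt0n.
  have -> : c *: 'X_[M] = (c *: 'X_[M - mset e]) * sqmono K e.
    by rewrite sqmonoE -scalerAl -mpolyXD submK.
  exact: in_ideal_mul.
pose T := sset M :&: e1.
have TT : T \in Tset E e1.
  rewrite inE subsetIr /=; apply/forall_inP => e eE; apply: contra (H e eE).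
  move=> eT; apply: subset_trans eT _; exact: subsetIl.
have le : (mset T <= M)%MM.
  apply/mnm_lepP => i; rewrite msetE; case: (boolP (i \in T)) => // iT.
  by move: iT; rewrite !inE lt0n => /andP[].
exists (fun T' => if T' == T then c *: 'X_[M - mset T] else 0); split.
  move=> T' _; case: eqP => [->|_]; last exact: in_subring0.
  move=> m; rewrite mcoeff_msupp mcoeffZ mcoeffX.
  case: (eqVneq (M - mset T)%MM m) => [<- _|_]; last by rewrite mulr0 eqxx.
  move=> i; rewrite /Zset !inE negb_or => /andP[iT iW].
  rewrite mnmBE msetE !inE (negbTE iT) subn0.
  apply/eqP; apply: contraR iW => Mi.
  have ie1 : i \notin e1 by move: iT; rewrite Mi.
  rewrite ie1 /=; apply/forall_inP => e eE; apply: contra (H e eE) => eiT.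
  apply: subset_trans eiT _; apply/subsetP => j; rewrite !inE.
  by case/orP => [/eqP ->|/andP[]//]; rewrite Mi.
rewrite (bigD1 T) //= eqxx big1 ?addr0; last first.
  by move=> T' /andP[_ /negbTE ->]; rewrite mulr0.
by rewrite sqmonoE -scalerAr -mpolyXD addmC submK // subrr; exact: in_ideal0.
Qed.

Lemma SP_all (K : fieldType) n (E : {set {set 'I_n}}) e1 f : SP K E e1 f.
Proof.
rewrite (mpolyE f); elim: (msupp f) => [|m s IH].
  by rewrite big_nil; exact: SP0.
by rewrite big_cons; apply: SPD => //; exact: SPX.
Qed.

Definition Dseq n (E : {set {set 'I_n}}) e1 :=
  [seq (T, Zset E e1 T) | T <- enum (Tset E e1)].

Lemma Dseq_nth n (E : {set {set 'I_n}}) e1 (i : 'I_(size (Dseq E e1))) :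
  exists2 T, T \in Tset E e1 & nth (set0, set0) (Dseq E e1) i = (T, Zset E e1 T).
Proof.
have := mem_nth (set0, set0) (ltn_ord i).
by case/mapP => T; rewrite mem_enum => TT ->; exists T.
Qed.

Lemma Dseq_fst n (E : {set {set 'I_n}}) e1 :
  map fst (Dseq E e1) = enum (Tset E e1).
Proof. by rewrite /Dseq; elim: (enum _) => //= T s ->. Qed.

Lemma Dseq_sum (K : fieldType) n (E : {set {set 'I_n}}) e1
    (F : {set 'I_n} -> {mpoly K[n]}) :
  \sum_(i < size (Dseq E e1)) F (nth (set0, set0) (Dseq E e1) i).1 =
  \sum_(T in Tset E e1) F T.
Proof.
rewrite -(big_mkord xpredT (fun i => F (nth (set0, set0) (Dseq E e1) i).1)).
by rewrite -(big_nth (set0, set0) xpredT (fun p => F p.1)) big_map big_enum.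
Qed.

Theorem lemma5p15 (K : fieldType) (n : nat) (V : {set 'I_n})
    (E : {set {set 'I_n}}) (e1 : {set 'I_n}) :
  is_clutter V E -> e1 \in E -> two_collage V E [set e1] ->
  sreg_le K E (#|e1| - 1).
Proof.
move=> _ He1 [_ hc2].
have hc : collage1 E e1.
  by move=> e eE; case: (hc2 e eE) => v _ [f /set1P -> H]; exists v.
pose x0 := (@set0 'I_n, @set0 'I_n).
exists (Dseq E e1); last first.
  rewrite /stanley_reg big_map big_seq; apply: (big_ind (fun x => x <= #|e1| - 1)%N) => //=.
    by move=> x y; rewrite geq_max => -> ->.
  move=> T; rewrite mem_enum inE => /andP[Te1 /forall_inP TE].
  have : T \proper e1 by rewrite properE Te1 TE.
  move/proper_card => /= H; rewrite /=; lia.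
split.
- by move=> p /mapP [T _ ->] /=; exact: subsetUl.
- move=> f; have [Q [HQ HI]] := SP_all E e1 f.
  exists (fun i => Q (nth x0 (Dseq E e1) i).1).
    by move=> i; have [T TT ->] := Dseq_nth i; exact: HQ.
  by rewrite (Dseq_sum E e1 (fun T => sqmono K T * Q T)).
move=> q Hq HI i.
have Tsi : forall j : 'I_(size (Dseq E e1)),
    (nth x0 (Dseq E e1) j).1 \in Tset E e1 /\
    (nth x0 (Dseq E e1) j).2 = Zset E e1 (nth x0 (Dseq E e1) j).1.
  by move=> j; have [T TT ->] := Dseq_nth j.
have inj : forall j k : 'I_(size (Dseq E e1)),
    (nth x0 (Dseq E e1) j).1 = (nth x0 (Dseq E e1) k).1 -> j = k.
  move=> j k; rewrite -!(nth_map x0 set0 fst) ?ltn_ord // Dseq_fst => Ejk.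
  have sz : size (enum (Tset E e1)) = size (Dseq E e1) by rewrite -Dseq_fst size_map.
  have hj : (j < size (enum (Tset E e1)))%N by rewrite sz.
  have hk : (k < size (enum (Tset E e1)))%N by rewrite sz.
  apply: val_inj; apply/eqP.
  by rewrite -(nth_uniq set0 hj hk (enum_uniq _)) Ejk.
pose t (j : 'I_(size (Dseq E e1))) := sqmono K (nth x0 (Dseq E e1) j).1 * q j.
have Hqj : forall j : 'I_(size (Dseq E e1)), in_subring (Zset E e1 (nth x0 (Dseq E e1) j).1) (q j).
  by move=> j; rewrite -(Tsi j).2; exact: Hq.
have t0 : t i = 0.
  apply/mpolyP => M; rewrite mcoeff0; apply/eqP/negPn/negP => HM.
  have HMs : M \in msupp (t i) by rewrite mcoeff_msupp.
  have [Hs1 Hs2] := good_mono hc (Tsi i).1 (Hqj i) HMs.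
  have : M \in msupp (\sum_(j < size (Dseq E e1)) t j).
    rewrite mcoeff_msupp raddf_sum (bigD1 i) //= big1 ?addr0 // => j ji.
    apply: memN_msupp_eq0; apply/negP => Mj.
    have [Hj1 _] := good_mono hc (Tsi j).1 (Hqj j) Mj.
    by move/eqP: ji; apply; apply: inj; rewrite -Hs1 -Hj1.
  move/(ideal_mono HI) => [e eE eM]; by move: (Hs2 e eE); rewrite eM.
apply/mpolyP => m.
have := congr1 (mcoeff (mset (nth x0 (Dseq E e1) i).1 + m)) t0.
by rewrite /t sqmonoE mulrC mcoeffMX mcoeff0 => ->; rewrite mcoeff0.
Qed.
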